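(* Let $V^{2n}$ be a real vector space with $J\in\mathrm{Aut}(V)$, $J^2=-I$, and a positive definite inner product $(\,,\,)$ for which $J$ is an isometry. Let $\mathbb{L}^p$, $p\geq 2$, be a real vector space with a Lorentzian inner product $\langle\,,\,\rangle$, let $\alpha\colon V^{2n}\times V^{2n}\to\mathbb{L}^p$ be a symmetric bilinear form, and suppose there is a light-like $w\in\mathbb{L}^p$ with $\langle\alpha(X,Y),w\rangle=-(X,Y)$ for all $X,Y$. Let $\beta,\gamma\colon V^{2n}\times V^{2n}\to W^{p,p}$ be defined by $\beta(X,Y)=(\alpha(X,Y)+\alpha(JX,JY),\alpha(X,JY)-\alpha(JX,Y))$ and $\gamma(X,Y)=(\alpha(X,Y),\alpha(X,JY))$. Assume $\beta$ is flat and $$\langle\!\langle\beta(X,Y),\gamma(Z,T)\rangle\!\rangle=\langle\!\langle\beta(X,T),\gamma(Z,Y)\rangle\!\rangle\quad\text{for all }X,Y,Z,T\in V^{2n}.$$ If $\mathcal{S}(\beta)$ is degenerate and $s\leq n-1$, then there is a $J$-invariant vector subspace $P^{2m}\subset V^{2n}$ with $m\geq n-s+1$ such that $$\langle\alpha(S,S),\alpha(JS,JS)\rangle-\langle\alpha(S,JS),\alpha(S,JS)\rangle\leq 0\quad\text{for all }S\in P^{2m}.$$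
   Context: $W^{p,p}=\mathbb{L}^p\oplus\mathbb{L}^p$ carries the inner product $\langle\!\langle(\xi,\bar\xi),(\eta,\bar\eta)\rangle\!\rangle=\langle\xi,\eta\rangle-\langle\bar\xi,\bar\eta\rangle$. $\beta$ is flat if $\langle\!\langle\beta(X,Y),\beta(Z,T)\rangle\!\rangle=\langle\!\langle\beta(X,T),\beta(Z,Y)\rangle\!\rangle$ for all $X,Y,Z,T$. $\mathcal{S}(\beta)=\mathrm{span}\{\beta(X,Y):X,Y\in V\}$; it is degenerate if $\mathcal S(\beta)\cap\mathcal S(\beta)^\perp\neq0$ with respect to $\langle\!\langle\,,\,\rangle\!\rangle$. $s=\dim U_0^s$, where $U_0^s=\pi_1(\mathcal{S}(\beta))\subset\mathbb{L}^p$ is the projection of $\mathcal S(\beta)$ onto the first factor. *)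

(* Defs.v *)
From HB Require Import structures.
From mathcomp Require Import all_boot all_order all_algebra.
From mathcomp Require Import reals.
Set Implicit Arguments. Unset Strict Implicit. Unset Printing Implicit Defensive.
Import Order.TTheory GRing.Theory Num.Theory.
Local Open Scope ring_scope.

Section Defs.
Variable R : realType.

Definition bform (k : nat) (M : 'M[R]_k) (x y : 'rV[R]_k) : R :=
  (x *m M *m y^T) 0 0.

Definition pos_def_inner (k : nat) (G : 'M[R]_k) : Prop :=
  G^T = G /\ forall x : 'rV[R]_k, x != 0 -> 0 < bform G x x.

(* Lorentzian (signature (p-1,1)) symmetric Gram matrix:
   congruent to diag(-1,1,...,1) *)
Definition lorentz_diag (p : nat) : 'M[R]_p :=
  diag_mx (\row_(i < p) (if (i : nat) == 0%N then -1 else 1)).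

Definition lorentzian (p : nat) (L : 'M[R]_p) : Prop :=
  L^T = L /\ exists P : 'M[R]_p, P \in unitmx /\ P *m L *m P^T = lorentz_diag p.

Definition sym_bilinear (k p : nat) (a : 'rV[R]_k -> 'rV[R]_k -> 'rV[R]_p) : Prop :=
  (forall X Y, a X Y = a Y X) /\
  (forall (c : R) X Y Z, a (c *: X + Y) Z = c *: a X Z + a Y Z).

(* W^{p,p} = L^p (+) L^p represented as 'rV_(p + p) via row_mx *)
Definition wform (p : nat) (L : 'M[R]_p) (u v : 'rV[R]_(p + p)) : R :=
  bform L (lsubmx u) (lsubmx v) - bform L (rsubmx u) (rsubmx v).

(* J acts on row vectors by right multiplication: JX := X *m J *)
Definition betaF (k p : nat) (J : 'M[R]_k) (a : 'rV[R]_k -> 'rV[R]_k -> 'rV[R]_p)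
  (X Y : 'rV[R]_k) : 'rV[R]_(p + p) :=
  row_mx (a X Y + a (X *m J) (Y *m J)) (a X (Y *m J) - a (X *m J) Y).

Definition gammaF (k p : nat) (J : 'M[R]_k) (a : 'rV[R]_k -> 'rV[R]_k -> 'rV[R]_p)
  (X Y : 'rV[R]_k) : 'rV[R]_(p + p) :=
  row_mx (a X Y) (a X (Y *m J)).

Definition flat (k p : nat) (L : 'M[R]_p) (b : 'rV[R]_k -> 'rV[R]_k -> 'rV[R]_(p + p)) : Prop :=
  forall X Y Z T, wform L (b X Y) (b Z T) = wform L (b X T) (b Z Y).

Definition in_Sspan (k q : nat) (b : 'rV[R]_k -> 'rV[R]_k -> 'rV[R]_q) (v : 'rV[R]_q) : Prop :=
  exists (N : nat) (Xs Ys : 'I_N -> 'rV[R]_k) (cs : 'I_N -> R),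
    v = \sum_(i < N) cs i *: b (Xs i) (Ys i).

Definition S_degenerate (k p : nat) (L : 'M[R]_p) (b : 'rV[R]_k -> 'rV[R]_k -> 'rV[R]_(p + p)) : Prop :=
  exists v, v != 0 /\ in_Sspan b v /\ (forall u, in_Sspan b u -> wform L v u = 0).

(* U0^s = pi_1(S(b)) *)
Definition U0 (k p : nat) (b : 'rV[R]_k -> 'rV[R]_k -> 'rV[R]_(p + p)) (u : 'rV[R]_p) : Prop :=
  exists v, in_Sspan b v /\ u = lsubmx v.

Definition has_dim (p : nat) (U : 'rV[R]_p -> Prop) (d : nat) : Prop :=
  exists B : 'M[R]_(d, p), row_free B /\ forall u, U u <-> (u <= B)%MS.

End Defs.

(* Main.v *)
Require Import Defs.
From HB Require Import structures.
From mathcomp Require Import all_boot all_order all_algebra.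
From mathcomp Require Import reals.
From mathcomp Require Import zify ring lra.
From Stdlib Require Import Classical.
Set Implicit Arguments. Unset Strict Implicit. Unset Printing Implicit Defensive.
Import Order.TTheory GRing.Theory Num.Theory.
Local Open Scope ring_scope.

Section BForm.
Variable R : realType.
Variable k : nat.
Variable M : 'M[R]_k.
Implicit Types x y z : 'rV[R]_k.

Lemma bformDl x y z : bform M (x + y) z = bform M x z + bform M y z.
Proof. by rewrite /bform !mulmxDl mxE. Qed.
Lemma bformZl a x z : bform M (a *: x) z = a * bform M x z.
Proof. by rewrite /bform -!scalemxAl mxE. Qed.
Lemma bformDr x y z : bform M x (y + z) = bform M x y + bform M x z.
Proof. by rewrite /bform linearD /= mulmxDr mxE. Qed.
Lemma bformZr a x z : bform M x (a *: z) = a * bform M x z.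
Proof. by rewrite /bform linearZ /= -scalemxAr mxE. Qed.
Lemma bformNl x z : bform M (- x) z = - bform M x z.
Proof. by rewrite -scaleN1r bformZl mulN1r. Qed.
Lemma bformNr x z : bform M x (- z) = - bform M x z.
Proof. by rewrite -scaleN1r bformZr mulN1r. Qed.
Lemma bformBl x y z : bform M (x - y) z = bform M x z - bform M y z.
Proof. by rewrite bformDl bformNl. Qed.
Lemma bformBr x y z : bform M x (y - z) = bform M x y - bform M x z.
Proof. by rewrite bformDr bformNr. Qed.
Lemma bform0l z : bform M 0 z = 0.
Proof. by rewrite -(scale0r 0) bformZl mul0r. Qed.
Lemma bform0r z : bform M z 0 = 0.
Proof. by rewrite -(scale0r 0) bformZr mul0r. Qed.
Lemma bform_sym x y : M^T = M -> bform M x y = bform M y x.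
Proof.
move=> hM; rewrite /bform; transitivity ((x *m M *m y^T)^T 0 0); first by rewrite [RHS]mxE.
by rewrite !trmx_mul trmxK hM mulmxA.
Qed.
Lemma bform_suml N (f : 'I_N -> 'rV[R]_k) z :
  bform M (\sum_(i < N) f i) z = \sum_(i < N) bform M (f i) z.
Proof.
by apply: (big_morph (fun x => bform M x z)) => [x y|]; rewrite ?bformDl ?bform0l.
Qed.
Lemma bform_sumr N (f : 'I_N -> 'rV[R]_k) z :
  bform M z (\sum_(i < N) f i) = \sum_(i < N) bform M z (f i).
Proof.
by apply: (big_morph (fun x => bform M z x)) => [x y|]; rewrite ?bformDr ?bform0r.
Qed.
End BForm.

Section Lor.
Variable R : realType.
Variable p : nat.
Variable L : 'M[R]_p.
Hypothesis hL : lorentzian L.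

Definition dd (i : 'I_p) : R := if (i : nat) == 0%N then -1 else 1.

Lemma lor_coord : exists Q : 'M[R]_p, Q \in unitmx /\
  forall x y, bform L x y = \sum_i (x *m Q) 0 i * (y *m Q) 0 i * dd i.
Proof.
case: hL => LT [P0 [uP0 hP]].
exists (invmx P0); split; first by rewrite unitmx_inv.
move=> x y.
have hx : x = x *m invmx P0 *m P0 by rewrite mulmxKV.
have hy : y = y *m invmx P0 *m P0 by rewrite mulmxKV.
have -> : bform L x y = ((x *m invmx P0) *m (P0 *m L *m P0^T) *m (y *m invmx P0)^T) 0 0.
  by rewrite /bform {1}hx {1}hy trmx_mul !mulmxA.
rewrite hP /lorentz_diag mul_mx_diag mxE; apply: eq_bigr => i _.
by rewrite !mxE /dd mulrAC.
Qed.

Lemma lor_pos (tau u : 'rV[R]_p) : bform L tau tau < 0 -> bform L u tau = 0 ->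
  u != 0 -> 0 < bform L u u.
Proof.
move=> htau hut hu.
have [Q [uQ hQ]] := lor_coord.
have LT : L^T = L by case: hL.
case: (pickP (fun i : 'I_p => (i : nat) == 0%N)) => [i0 hi0 | none]; last first.
  exfalso; move: htau; rewrite hQ; apply/negP; rewrite -leNgt; apply: sumr_ge0 => i _.
  by rewrite /dd (none i) mulr1 -expr2 sqr_ge0.
pose cf := fun x : 'rV[R]_p => x *m Q.
pose S := fun x : 'rV[R]_p => \sum_(i | i != i0) (cf x 0 i) ^+ 2.
have hsplit : forall x, bform L x x = - (cf x 0 i0) ^+ 2 + S x.
  move=> x; rewrite hQ (bigD1 i0) //= /dd hi0 mulrN1 expr2; congr (_ + _).
  apply: eq_bigr => i hi; rewrite ifF ?mulr1 ?expr2 //.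
  apply/negP => /eqP h; move/negP: hi; apply; apply/eqP/val_inj; rewrite /= h.
  by apply/esym/eqP.
have S0 : forall x, 0 <= S x by move=> x; apply: sumr_ge0 => i _; exact: sqr_ge0.
pose t0 := cf tau 0 i0.
have t00 : t0 != 0.
  apply/negP => /eqP h; move: htau; rewrite hsplit -/t0 h expr2 mulr0 oppr0 add0r.
  by apply/negP; rewrite -leNgt; exact: S0.
rewrite ltNge; apply/negP => hu0.
pose a := cf u 0 i0.
pose z := a *: tau - t0 *: u.
have LTs : bform L tau u = 0 by rewrite bform_sym.
have hz : bform L z z = a ^+ 2 * bform L tau tau + t0 ^+ 2 * bform L u u.
  rewrite /z !(bformBl, bformBr, bformZl, bformZr) LTs hut; ring.
have cz0 : cf z 0 i0 = 0.
  by rewrite /cf /z mulmxBl -!scalemxAl !mxE /a /t0 /cf !mxE mulrC subrr.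
have hzS : bform L z z = S z by rewrite hsplit cz0 expr2 mulr0 oppr0 add0r.
have h1 : a ^+ 2 * bform L tau tau <= 0 by rewrite mulr_ge0_le0 ?sqr_ge0 // ltW.
have h2 : t0 ^+ 2 * bform L u u <= 0 by rewrite mulr_ge0_le0 ?sqr_ge0.
have S0z := S0 z.
have Sz0 : S z = 0 by lra.
have h1e : a ^+ 2 * bform L tau tau = 0 by lra.
have a0 : a = 0.
  move/eqP: h1e; rewrite mulf_eq0 expf_eq0 /= => /orP [/eqP //|/eqP h].
  by move: htau; rewrite h ltxx.
have cz : cf z = 0.
  apply/rowP => i; case: (eqVneq i i0) => [->|hi]; first by rewrite cz0 mxE.
  rewrite [RHS]mxE; apply/eqP; rewrite -sqrf_eq0; apply/eqP.
  move: i hi; apply: psumr_eq0P => // i _; exact: sqr_ge0.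
have z0 : z = 0 by rewrite -[z](mulmxK uQ) -/(cf z) cz mul0mx.
move: z0; rewrite /z a0 scale0r sub0r => /eqP; rewrite oppr_eq0 scaler_eq0.
by apply/negP; rewrite negb_or t00.
Qed.

Lemma lor_perp (eta w x : 'rV[R]_p) : bform L eta eta = 0 -> bform L w w = 0 ->
  bform L eta w != 0 -> bform L x eta = 0 -> bform L x w = 0 ->
  0 <= bform L x x /\ (x != 0 -> 0 < bform L x x).
Proof.
move=> hee hww hc hxe hxw.
have LT : L^T = L by case: hL.
pose c := bform L eta w.
pose tau := eta - c^-1 *: w.
have htau : bform L tau tau < 0.
  have -> : bform L tau tau = -2.
    rewrite /tau !(bformBl, bformBr, bformZl, bformZr) hee hww (bform_sym w eta LT) -/c.
    by rewrite mulVf //; ring.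
  by rewrite oppr_lt0 ltr0n.
have hxt : bform L x tau = 0.
  by rewrite /tau !(bformBl, bformBr, bformZl, bformZr) hxe hxw mulr0 subr0.
split; last by move=> hx; exact: (lor_pos htau hxt hx).
case: (eqVneq x 0) => [->|]; first by rewrite bform0l.
by move=> /(lor_pos htau hxt)/ltW.
Qed.

Lemma lor_par (eta w : 'rV[R]_p) : (0 < p)%N -> bform L eta eta = 0 ->
  bform L w w = 0 -> w != 0 -> bform L eta w = 0 -> exists mu, eta = mu *: w.
Proof.
move=> hp hee hww hw hew.
have LT : L^T = L by case: hL.
have [Q [uQ hQ]] := lor_coord.
pose i0 : 'I_p := Ordinal hp.
pose t0 := (delta_mx 0 i0 : 'rV[R]_p) *m invmx Q.
have ht0 : bform L t0 t0 < 0.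
  rewrite hQ /t0 mulmxKV // (bigD1 i0) //= big1 ?addr0.
    by rewrite !mxE !eqxx /dd /= !mul1r ltrN10.
  by move=> i hi; rewrite !mxE (negPf hi) andbF !mul0r.
have hwt : bform L w t0 != 0.
  apply/negP => /eqP h; have := lor_pos ht0 h hw; by rewrite hww ltxx.
pose mu := bform L eta t0 / bform L w t0.
pose y := eta - mu *: w.
have hyt : bform L y t0 = 0.
  by rewrite /y bformBl bformZl /mu mulrAC -mulrA divff // mulr1 subrr.
have hyy : bform L y y = 0.
  rewrite /y !(bformBl, bformBr, bformZl, bformZr) hee hww hew (bform_sym w eta LT) hew.
  by rewrite !(mulr0, subr0).
exists mu; apply/eqP; rewrite -subr_eq0 -/y; apply/negP => hy.
by have := lor_pos ht0 hyt (introN idP hy); rewrite hyy ltxx.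
Qed.

End Lor.

Lemma exists_max (T : Type) (f : T -> nat) (b : nat) (x1 : T) :
  (forall x, (f x <= b)%N) -> exists x0, forall x, (f x <= f x0)%N.
Proof.
move=> hb.
suff : forall d x0, (b - f x0 <= d)%N -> exists x1, forall x, (f x <= f x1)%N.
  by move=> /(_ (b - f x1)%N x1 (leqnn _)).
elim=> [|d IH] x0 h.
  by exists x0 => x; apply: (leq_trans (hb x)); rewrite -subn_eq0 -leqn0.
case: (classic (exists x, (f x0 < f x)%N)) => [[x hx]|hn].
  apply: (IH x); have := hb x; lia.
exists x0 => x; rewrite leqNgt; apply/negP => hx; apply: hn; by exists x.
Qed.

Lemma lin_mxE (R : realType) k q (f : 'rV[R]_k -> 'rV[R]_q) :
  (forall c y z, f (c *: y + z) = c *: f y + f z) ->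
  forall y, y *m (\matrix_(i, j) f (delta_mx 0 i) 0 j) = f y.
Proof.
move=> hf.
have f0 : f 0 = 0.
  have h := hf 1 0 0; rewrite !scale1r !addr0 in h.
  by apply: (addrI (f 0)); rewrite addr0 -h.
have fD : forall y z, f (y + z) = f y + f z by move=> y z; have := hf 1 y z; rewrite !scale1r.
have fZ : forall c y, f (c *: y) = c *: f y by move=> c y; rewrite -[c *: y]addr0 hf f0 addr0.
move=> y; rewrite mulmx_sum_row {2}(row_sum_delta y).
rewrite (big_morph f fD f0); apply: eq_bigr => i _; rewrite fZ; congr (_ *: _).
by apply/rowP => j; rewrite !mxE.
Qed.

Lemma even_rank (R : realType) k (J P : 'M[R]_k) :
  J *m J = - 1%:M -> (P *m J <= P)%MS -> ~~ odd (\rank P).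
Proof.
move=> hJ hP.
pose B := row_base P.
have fB : row_free B := row_base_free P.
have hB : (B *m J <= B)%MS by rewrite (eqmxMr J (eq_row_base P)) eq_row_base.
pose M := B *m J *m pinvmx B.
have BM : M *m B = B *m J by rewrite mulmxKpV.
have MM : M *m M = - 1%:M.
  apply: (row_free_inj fB); rewrite -mulmxA BM mulmxA BM -mulmxA hJ.
  by rewrite mulmxN mulmx1 mulNmx mul1mx.
have hd : \det M ^+ 2 = (-1) ^+ \rank P.
  by rewrite expr2 -det_mulmx MM -scaleN1r detZ det_scalar expr1n mulr1.
apply/negP => ho; have := sqr_ge0 (\det M); rewrite hd -signr_odd ho expr1 => h.
by move: h; rewrite ler0N1.
Qed.

Lemma exists_noneig (F : numFieldType) k (A : 'M[F]_k) :
  exists2 l : F, l != 0 & ~~ eigenvalue A l.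
Proof.
set p := char_poly A.
have pn0 : p != 0 := monic_neq0 (char_poly_monic A).
set rs := [seq (i.+1)%:R : F | i <- iota 0 (size p)].
have [/allP allr|] := boolP (all (root p) rs).
  exfalso; move/negP: pn0; apply; apply/eqP.
  apply: (@roots_geq_poly_eq0 _ p rs).
  - by apply/allP.
  - by rewrite map_inj_uniq ?iota_uniq // => i j /eqP; rewrite eqr_nat eqSS => /eqP.
  - by rewrite /rs size_map size_iota.
move/allPn => [x /mapP [i _ ->] nr]; exists (i.+1)%:R; first by rewrite pnatr_eq0.
by rewrite eigenvalue_root_char.
Qed.

Lemma reg_lemma (F : numFieldType) a q (M0 M1 : 'M[F]_(a,q)) (t : 'rV_a) :
  t *m M0 = 0 -> (forall e : F, \rank (M0 + e *: M1)%R <= \rank M0)%N ->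
  (t *m M1 <= M0)%MS.
Proof.
move=> tM0 Hmax; apply/negPn/negP => Hn.
set r := \rank M0.
set Rb := row_base M0.
set Y := Rb *m pinvmx M0.
have YM0 : Y *m M0 = Rb by rewrite mulmxKpV // eq_row_base.
set N0 := col_mx Rb (t *m M1).
have rRb : \rank Rb = r by rewrite eq_row_base.
have fr : row_free N0.
  rewrite /row_free -addsmxE; apply/eqP/anti_leq/andP; split.
    rewrite (leq_trans (mxrank_adds_leqif _ _)) //=.
    by rewrite eq_row_base rank_rV leq_add2l; case: (t *m M1 != 0).
  have := mxrank_leqif_sup (addsmxSl Rb (t *m M1)).
  move=> [H1 H2]; rewrite eq_row_base in H1 H2 *; rewrite addn1 ltn_neqAle H1 andbT H2.
  apply/negP => /(submx_trans (addsmxSr _ _)); rewrite eq_row_base; exact/negP.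
have [Z NZ] := row_freeP fr.
set E := col_mx (Y *m M1) (0 : 'rV_q) *m Z.
have [l l0 nel] := exists_noneig E.
set e := - l^-1.
have e0 : e != 0 by rewrite oppr_eq0 invr_eq0.
set N1 := col_mx (Y *m (M0 + e *: M1)) (t *m M1).
have N1E : N1 = N0 + e *: col_mx (Y *m M1) 0.
  by rewrite /N1 /N0 scale_col_mx add_col_mx scaler0 addr0 mulmxDr YM0 -scalemxAr.
have fr1 : row_free N1.
  apply: inj_row_free => v vN.
  have : v *m N1 *m Z = 0 by rewrite vN mul0mx.
  rewrite N1E mulmxDr mulmxDl -mulmxA NZ mulmx1 -scalemxAr.
  move=> h.
  have H : e *: (v *m E) = - v.
    by rewrite /E mulmxA scalemxAl; apply/eqP; rewrite -addr_eq0 addrC h.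
  have vE : v *m E = l *: v.
    have := congr1 (fun x => (- l) *: x) H; rewrite /= scalerA /e mulrNN mulfV //.
    by rewrite scale1r scaleNr scalerN opprK.
  apply/eqP; apply: contraNT nel => vn0; apply/eigenvalueP; exists v => //.
set D := block_mx (1%:M : 'M_r) 0 0 (e%:M : 'M_1).
have N2E : col_mx Y t *m (M0 + e *: M1) = D *m N1.
  rewrite mul_col_mx /D /N1 mul_block_col !mul1mx !mul0mx addr0 add0r.
  by rewrite mul_scalar_mx; congr (col_mx _ _); rewrite mulmxDr tM0 add0r scalemxAr.
have fr2 : row_free (D *m N1).
  apply: inj_row_free => v; rewrite mulmxA -(mul0mx _ N1) => /(row_free_inj fr1).
  rewrite -[v]hsubmxK /D mul_row_block !mulmx0 !mulmx1 !addr0 add0r mul_mx_scalar.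
  rewrite -row_mx0 => /eq_row_mx [-> /eqP].
  by rewrite scaler_eq0 (negPf e0) /= => /eqP ->; rewrite row_mx0.
have := mxrankM_maxr (col_mx Y t) (M0 + e *: M1).
rewrite N2E (eqP fr2) => h; have := leq_trans h (Hmax e).
by rewrite /r addn1 ltnn.
Qed.

Lemma sum_row_mx (R : realType) q N (c : 'I_N -> R) (f g : 'I_N -> 'rV[R]_q) :
  \sum_(i < N) c i *: row_mx (f i) (g i) =
  row_mx (\sum_(i < N) c i *: f i) (\sum_(i < N) c i *: g i).
Proof.
apply: (big_rec3 (fun a b c => a = row_mx b c)) => [|i x y z _ ->].
  by rewrite row_mx0.
by rewrite scale_row_mx add_row_mx.
Qed.

Section Main.
Variable R : realType.
Variables n p s : nat.
Variables J G : 'M[R]_(2 * n).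
Variable L : 'M[R]_p.
Variable alpha : 'rV[R]_(2 * n) -> 'rV[R]_(2 * n) -> 'rV[R]_p.
Variable w : 'rV[R]_p.
Hypothesis hJ : J *m J = - 1%:M.
Hypothesis hG : pos_def_inner G.
Hypothesis hGJ : forall X Y : 'rV[R]_(2 * n), bform G (X *m J) (Y *m J) = bform G X Y.
Hypothesis hp : (2 <= p)%N.
Hypothesis hL : lorentzian L.
Hypothesis ha : sym_bilinear alpha.
Hypothesis hw0 : w != 0.
Hypothesis hww : bform L w w = 0.
Hypothesis haw : forall X Y, bform L (alpha X Y) w = - bform G X Y.
Hypothesis hflat : flat L (betaF J alpha).
Hypothesis hgam : forall X Y Z T, wform L (betaF J alpha X Y) (gammaF J alpha Z T)
                   = wform L (betaF J alpha X T) (gammaF J alpha Z Y).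
Hypothesis hdeg : S_degenerate L (betaF J alpha).
Hypothesis hdim : has_dim (U0 (betaF J alpha)) s.
Hypothesis hsn : (s.+1 <= n)%N.

Local Notation V := 'rV[R]_(2 * n).
Local Notation gf := (bform G).
Local Notation lf := (bform L).

Lemma LT : L^T = L. Proof. by case: hL. Qed.
Lemma GT : G^T = G. Proof. by case: hG. Qed.
Lemma lfC u v : lf u v = lf v u. Proof. exact: bform_sym LT. Qed.
Lemma gfC (X Y : V) : gf X Y = gf Y X. Proof. exact: bform_sym GT. Qed.
Lemma JJ (X : V) : X *m J *m J = - X.
Proof. by rewrite -mulmxA hJ mulmxN mulmx1. Qed.
Lemma gfJl (X Y : V) : gf (X *m J) Y = - gf X (Y *m J).
Proof. by rewrite -hGJ JJ bformNl. Qed.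
Lemma gfXJX (X : V) : gf X (X *m J) = 0.
Proof. have h := gfJl X X; rewrite gfC in h; lra. Qed.
Lemma gf_pos (X : V) : X != 0 -> 0 < gf X X.
Proof. by case: hG => _; apply. Qed.

Lemma aC X Y : alpha X Y = alpha Y X. Proof. by case: ha. Qed.
Lemma aL c X Y Z : alpha (c *: X + Y) Z = c *: alpha X Z + alpha Y Z.
Proof. by case: ha. Qed.
Lemma a0l Z : alpha 0 Z = 0.
Proof.
have h := aL 1 0 0 Z; rewrite !scale1r !addr0 in h.
by apply: (addrI (alpha 0 Z)); rewrite addr0 -h.
Qed.
Lemma aDl X Y Z : alpha (X + Y) Z = alpha X Z + alpha Y Z.
Proof. by have := aL 1 X Y Z; rewrite !scale1r. Qed.
Lemma aZl c X Z : alpha (c *: X) Z = c *: alpha X Z.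
Proof. by rewrite -[c *: X]addr0 aL a0l addr0. Qed.
Lemma aNl X Z : alpha (- X) Z = - alpha X Z.
Proof. by rewrite -scaleN1r aZl scaleN1r. Qed.
Lemma aDr X Y Z : alpha Z (X + Y) = alpha Z X + alpha Z Y.
Proof. by rewrite !(aC Z) aDl. Qed.
Lemma aZr c X Z : alpha Z (c *: X) = c *: alpha Z X.
Proof. by rewrite !(aC Z) aZl. Qed.
Lemma aNr X Z : alpha Z (- X) = - alpha Z X.
Proof. by rewrite !(aC Z) aNl. Qed.

Fact aa_key : unit. Proof. exact: tt. Qed.
Definition aa := locked_with aa_key (fun X Y : V => alpha X Y + alpha (X *m J) (Y *m J)).
Lemma aaE X Y : aa X Y = alpha X Y + alpha (X *m J) (Y *m J).
Proof. by rewrite /aa; case: aa_key. Qed.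
Fact bb_key : unit. Proof. exact: tt. Qed.
Definition bb := locked_with bb_key (fun X Y : V => alpha X (Y *m J) - alpha (X *m J) Y).
Lemma bbE X Y : bb X Y = alpha X (Y *m J) - alpha (X *m J) Y.
Proof. by rewrite /bb; case: bb_key. Qed.
Lemma betaE X Y : betaF J alpha X Y = row_mx (aa X Y) (bb X Y).
Proof. by rewrite aaE bbE. Qed.
Lemma wformE (u1 u2 v1 v2 : 'rV[R]_p) :
  wform L (row_mx u1 u2) (row_mx v1 v2) = lf u1 v1 - lf u2 v2.
Proof. by rewrite /wform !row_mxKl !row_mxKr. Qed.

Lemma aaC X Y : aa Y X = aa X Y.
Proof. by rewrite !aaE aC (aC (Y *m J)). Qed.
Lemma bbC X Y : bb Y X = - bb X Y.
Proof. by rewrite !bbE (aC Y) (aC (Y *m J)) opprB. Qed.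
Lemma aaJl X Y : aa (X *m J) Y = - bb X Y.
Proof. by rewrite !aaE !bbE JJ aNl opprB addrC. Qed.
Lemma aaJr X Y : aa X (Y *m J) = bb X Y.
Proof. by rewrite !aaE !bbE JJ aNr. Qed.
Lemma bbJl X Y : bb (X *m J) Y = aa X Y.
Proof. by rewrite !aaE !bbE JJ aNl opprK addrC. Qed.
Lemma bbJr X Y : bb X (Y *m J) = - aa X Y.
Proof. by rewrite !aaE !bbE JJ aNr opprD. Qed.
Lemma bb_diag X : bb X X = 0.
Proof. by rewrite !bbE aC subrr. Qed.
Lemma aaw X Y : lf (aa X Y) w = -2 * gf X Y.
Proof. by rewrite !aaE bformDl !haw hGJ; ring. Qed.
Lemma bbw X Y : lf (bb X Y) w = -2 * gf X (Y *m J).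
Proof. by rewrite !bbE bformBl !haw gfJl; ring. Qed.

Lemma mulJ_lin c (X Y : V) : (c *: X + Y) *m J = c *: (X *m J) + Y *m J.
Proof. by rewrite mulmxDl scalemxAl. Qed.
Lemma aa_linl c X Y Z : aa (c *: X + Y) Z = c *: aa X Z + aa Y Z.
Proof. by rewrite !aaE mulJ_lin !aL scalerDr addrACA. Qed.
Lemma aa_linr c X Y Z : aa Z (c *: X + Y) = c *: aa Z X + aa Z Y.
Proof. by rewrite -!(aaC Z) aa_linl. Qed.
Lemma bb_linl c X Y Z : bb (c *: X + Y) Z = c *: bb X Z + bb Y Z.
Proof. by rewrite !bbE mulJ_lin !aL scalerBr addrACA opprD. Qed.
Lemma bb_linr c X Y Z : bb Z (c *: X + Y) = c *: bb Z X + bb Z Y.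
Proof. by rewrite (bbC (c *: X + Y) Z) bb_linl (bbC X Z) (bbC Y Z) scalerN opprD. Qed.


Lemma exists_eta : exists eta, [/\ eta != 0, lf eta eta = 0,
  (forall X Y, lf eta (aa X Y) = 0 /\ lf eta (bb X Y) = 0) &
  U0 (betaF J alpha) eta].
Proof.
case: hdeg => v [v0 [[N [Xs [Ys [cs hv]]]] hort]].
have hb : forall X Y, wform L v (betaF J alpha X Y) = 0.
  move=> X Y; apply: hort; exists 1%N, (fun=> X), (fun=> Y), (fun=> 1).
  by rewrite big_ord1 scale1r.
pose v1 := \sum_(i < N) cs i *: aa (Xs i) (Ys i).
pose v2 := \sum_(i < N) cs i *: bb (Xs i) (Ys i).
have hv' : v = row_mx v1 v2.
  by rewrite hv -sum_row_mx; apply: eq_bigr => i _; rewrite betaE.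
have e : forall X Y, lf v1 (aa X Y) - lf v2 (bb X Y) = 0.
  by move=> X Y; have := hb X Y; rewrite hv' betaE wformE.
have horth : forall X Y, [/\ lf v1 (aa X Y) = 0, lf v2 (bb X Y) = 0,
                          lf v1 (bb X Y) = 0 & lf v2 (aa X Y) = 0].
  move=> X Y.
  have e1 := e X Y.
  have e2 := e Y X; rewrite aaC bbC bformNr in e2.
  have e3 := e (X *m J) Y; rewrite aaJl bbJl bformNr in e3.
  have e4 := e Y (X *m J); rewrite (aaC (X *m J) Y) aaJl (bbC (X *m J) Y) bbJl !bformNr in e4.
  split; lra.
case: (eqVneq v1 0) => [h1|h1].
  have h2 : v2 != 0 by apply: contraNneq v0 => h2; rewrite hv' h1 h2 row_mx0.
  exists v2; split => //.
  - rewrite {2}/v2 bform_sumr big1 // => i _; rewrite bformZr.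
    by case: (horth (Xs i) (Ys i)) => _ -> _ _; rewrite mulr0.
  - by move=> X Y; case: (horth X Y).
  exists (\sum_(i < N) cs i *: betaF J alpha (Xs i) (Ys i *m J)); split.
    by exists N, Xs, (fun i => Ys i *m J), cs.
  under eq_bigr do rewrite betaE.
  rewrite sum_row_mx row_mxKl /v2; apply: eq_bigr => i _; by rewrite aaJr.
exists v1; split => //.
- rewrite {2}/v1 bform_sumr big1 // => i _; rewrite bformZr.
  by case: (horth (Xs i) (Ys i)) => -> _ _ _; rewrite mulr0.
- by move=> X Y; case: (horth X Y).
by exists v; split; [exists N, Xs, Ys, cs | rewrite hv' row_mxKl].
Qed.


Lemma wform0l (v : 'rV[R]_(p + p)) : wform L 0 v = 0.
Proof.
have -> : (0 : 'rV[R]_(p + p)) = row_mx 0 0 by rewrite row_mx0.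
by rewrite /wform row_mxKl row_mxKr !bform0l subrr.
Qed.

Lemma n_pos : (0 < 2 * n)%N. Proof. lia. Qed.
Definition e0 : V := delta_mx 0 (Ordinal n_pos).
Lemma e0_neq0 : e0 != 0.
Proof. by apply/negP => /eqP /rowP /(_ (Ordinal n_pos)); rewrite !mxE !eqxx /=; apply/eqP; rewrite oner_eq0. Qed.

Variable Bm : 'M[R]_(s, p).
Hypothesis hBf : row_free Bm.
Hypothesis hBU : forall u, U0 (betaF J alpha) u <-> (u <= Bm)%MS.
Variable eta : 'rV[R]_p.
Hypothesis he0 : eta != 0.
Hypothesis hee : lf eta eta = 0.
Hypothesis heab : forall X Y, lf eta (aa X Y) = 0 /\ lf eta (bb X Y) = 0.
Hypothesis heU : U0 (betaF J alpha) eta.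

Lemma aa_B X Y : (aa X Y <= Bm)%MS.
Proof.
apply/hBU; exists (betaF J alpha X Y); split; last by rewrite betaE row_mxKl.
by exists 1%N, (fun=> X), (fun=> Y), (fun=> 1); rewrite big_ord1 scale1r.
Qed.
Lemma eta_B : (eta <= Bm)%MS. Proof. exact/hBU. Qed.
Lemma eaa X Y : lf eta (aa X Y) = 0. Proof. by case: (heab X Y). Qed.
Lemma ebb X Y : lf eta (bb X Y) = 0. Proof. by case: (heab X Y). Qed.

Definition c := lf eta w.
Lemma c_neq0 : c != 0.
Proof.
apply/negP => /eqP hc.
have [mu hmu] := lor_par hL (leq_trans (isT : (0 < 2)%N) hp) hee hww hw0 hc.
have h := eaa e0 e0; rewrite hmu bformZl lfC aaw in h.
have hg := gf_pos e0_neq0.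
move/eqP: h; rewrite mulf_eq0 => /orP [/eqP hm|]; last by lra.
by move: he0; rewrite hmu hm scale0r eqxx.
Qed.

Fact D_key : unit. Proof. exact: tt. Qed.
Definition D := locked_with D_key (fun X Y => aa X Y + (2 * gf X Y / c) *: eta).
Lemma DE X Y : D X Y = aa X Y + (2 * gf X Y / c) *: eta.
Proof. by rewrite /D; case: D_key. Qed.
Lemma D_w X Y : lf (D X Y) w = 0.
Proof.
rewrite !DE bformDl bformZl aaw -/c.
by have := c_neq0 => hc; field.
Qed.
Lemma D_eta X Y : lf (D X Y) eta = 0.
Proof. by rewrite !DE bformDl bformZl lfC eaa hee mulr0 addr0. Qed.
Lemma D_pos x : lf x eta = 0 -> lf x w = 0 -> 0 <= lf x x /\ (x != 0 -> 0 < lf x x).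
Proof. move=> h1 h2; exact: (@lor_perp _ _ _ hL eta w x hee hww c_neq0 h1 h2). Qed.
Lemma DD X Y Z T : lf (D X Y) (D Z T) = lf (aa X Y) (aa Z T).
Proof.
rewrite !DE; move: (eaa X Y) (eaa Z T); move: (aa X Y) (aa Z T) => A B hA hB.
rewrite !(bformDl, bformDr, bformZl, bformZr) hee (lfC A eta) hA hB.
by rewrite !mulr0 !addr0.
Qed.
Lemma DJr X Y : D X (Y *m J) = bb X Y + (2 * gf X (Y *m J) / c) *: eta.
Proof. by rewrite !DE aaJr. Qed.
Lemma DC X Y : D Y X = D X Y.
Proof. by rewrite !DE aaC gfC. Qed.
Lemma DJC X Y : D Y (X *m J) = - D X (Y *m J).
Proof.
rewrite !DJr bbC gfC gfJl [RHS]opprD -scaleNr; congr (_ + _ *: _); ring.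
Qed.
Lemma D_linl a X Y Z : D (a *: X + Y) Z = a *: D X Z + D Y Z.
Proof.
rewrite !DE aa_linl bformDl bformZl scalerDr addrACA scalerA; congr (_ + _).
by rewrite -scalerDl; congr (_ *: _); ring.
Qed.
Lemma D_linr a X Y Z : D Z (a *: X + Y) = a *: D Z X + D Z Y.
Proof. by rewrite -!(DC Z) D_linl. Qed.
Lemma D0 X : D X 0 = 0.
Proof.
have h := D_linr 1 0 0 X; rewrite !scale1r !addr0 in h.
by apply: (addrI (D X 0)); rewrite addr0 -h.
Qed.
Lemma D_N X Y : D X (- Y) = - D X Y.
Proof. by have := D_linr (-1) Y 0 X; rewrite !addr0 D0 addr0 !scaleN1r. Qed.

Definition bE X Y := row_mx (D X Y) (D X (Y *m J)).
Lemma bE_w X Y Z T : wform L (bE X Y) (bE Z T) = wform L (betaF J alpha X Y) (betaF J alpha Z T).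
Proof. by rewrite /bE !betaE !wformE !DD !aaJr. Qed.
Lemma bE_flat X Y Z T : wform L (bE X Y) (bE Z T) = wform L (bE X T) (bE Z Y).
Proof. by rewrite !bE_w hflat. Qed.
Lemma bE_linl a X Y Z : bE (a *: X + Y) Z = a *: bE X Z + bE Y Z.
Proof. by rewrite /bE !D_linl scale_row_mx add_row_mx. Qed.
Lemma bE_linr a X Y Z : bE Z (a *: X + Y) = a *: bE Z X + bE Z Y.
Proof. by rewrite /bE mulJ_lin !D_linr scale_row_mx add_row_mx. Qed.

Definition ME (x : V) : 'M[R]_(2 * n, p + p) := \matrix_(i, j) bE x (delta_mx 0 i) 0 j.
Lemma ME_mul x y : y *m ME x = bE x y.
Proof. exact: (lin_mxE (fun a y z => bE_linr a y z x)). Qed.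
Lemma ME_lin x t a : ME (x + a *: t) = ME x + a *: ME t.
Proof. by apply/row_matrixP => i; rewrite !rowE mulmxDr -scalemxAr !ME_mul (addrC x) bE_linl addrC. Qed.

Lemma ker_D x0 : (forall x, \rank (ME x) <= \rank (ME x0))%N ->
  forall t, t *m ME x0 = 0 -> forall Y, D t Y = 0.
Proof.
move=> hmax t ht.
have hreg : (t *m ME t <= ME x0)%MS.
  by apply: reg_lemma ht _ => a; rewrite -ME_lin; apply: hmax.
rewrite ME_mul in hreg; case/submxP: hreg => u hu; rewrite ME_mul in hu.
have h0 : bE x0 t = 0 by rewrite -ME_mul.
have hw1 : wform L (bE t t) (bE t t) = 0 by rewrite {1}hu bE_flat h0 wform0l.
have Dtt' : D t (t *m J) = 0.
  by rewrite DJr bb_diag gfXJX mulr0 mul0r scale0r addr0.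
move: hw1; rewrite /bE wformE Dtt' bform0l subr0 => hDD.
have Dz : forall x, lf x x = 0 -> lf x eta = 0 -> lf x w = 0 -> x = 0.
  move=> x hx h1 h2; apply/eqP; apply: contraT => hne.
  by have [_ /(_ hne)] := D_pos h1 h2; rewrite hx ltxx.
have Dtt : D t t = 0 by apply: Dz; rewrite ?D_eta ?D_w.
move=> Y.
have hf := bE_flat t Y Y t.
rewrite /bE !wformE Dtt Dtt' !bform0l subrr (DC t Y) (DJC t Y) bformNr opprK in hf.
have [h1 _] := D_pos (D_eta t Y) (D_w t Y).
have [h2 _] := D_pos (D_eta t (Y *m J)) (D_w t (Y *m J)).
apply: Dz; rewrite ?D_eta ?D_w //; lra.
Qed.


Definition MD (x0 : V) : 'M[R]_(2 * n, p) := \matrix_(i, j) D x0 (delta_mx 0 i) 0 j.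
Lemma MD_mul x0 y : y *m MD x0 = D x0 y.
Proof. exact: (lin_mxE (fun a y z => D_linr a y z x0)). Qed.
Lemma ME_split x0 : ME x0 = row_mx (MD x0) (J *m MD x0).
Proof.
by apply/row_matrixP => i; rewrite !rowE ME_mul mul_mx_row mulmxA !MD_mul.
Qed.

Lemma rank_row_mx_le m n1 n2 (A : 'M[R]_(m, n1)) (B : 'M[R]_(m, n2)) :
  (\rank (row_mx A B) <= \rank A + \rank B)%N.
Proof.
rewrite -mxrank_tr tr_row_mx -addsmxE.
by case: (mxrank_adds_leqif A^T B^T) => h _; rewrite !mxrank_tr in h.
Qed.

Lemma rank_MD x0 : ((\rank (MD x0)).+1 <= s)%N.
Proof.
pose v0 := aa e0 e0.
have hMB : (MD x0 <= Bm)%MS.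
  apply/row_subP => i; rewrite rowE MD_mul DE; apply: addmx_sub; first exact: aa_B.
  exact: scalemx_sub eta_B.
have hv0B : (v0 <= Bm)%MS := aa_B e0 e0.
have hlt : (\rank (MD x0) < \rank (MD x0 + v0)%MS)%N.
  have [h1 h2] := mxrank_leqif_sup (addsmxSl (MD x0) v0).
  rewrite ltn_neqAle h1 h2 andbT; apply/negP => h.
  have := submx_trans (addsmxSr _ _) h; case/submxP => u hu.
  have := aaw e0 e0; rewrite -/v0 hu MD_mul D_w => h0.
  have := gf_pos e0_neq0; lra.
apply: (leq_trans hlt); rewrite -(eqP hBf); apply: mxrankS.
by rewrite addsmx_sub hMB hv0B.
Qed.

Lemma rank_ME x0 : ((\rank (ME x0)).+2 <= 2 * s)%N.
Proof.
rewrite ME_split; have h1 := rank_row_mx_le (MD x0) (J *m MD x0).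
have h2 : (\rank (J *m MD x0) <= \rank (MD x0))%N := mxrankM_maxr _ _.
have h3 := rank_MD x0; lia.
Qed.

Lemma JME x0 : J *m ME x0 = ME x0 *m block_mx 0 (- 1%:M) 1%:M 0.
Proof.
apply/row_matrixP => i; rewrite !rowE !mulmxA !ME_mul /bE JJ D_N mul_row_block.
by rewrite !mulmx0 !mulmx1 !add0r addr0 mulmxN mulmx1.
Qed.

Lemma N0_stable x0 : (kermx (ME x0) *m J <= kermx (ME x0))%MS.
Proof. by rewrite sub_kermx -mulmxA JME mulmxA mulmx_ker mul0mx. Qed.

Lemma cancel_pos (a b : R) : 0 < a -> a * b = 0 -> b = 0.
Proof. by move=> hpos /eqP; rewrite mulf_eq0 gt_eqF //= => /eqP. Qed.

Lemma aux_alg (c0 a1 b1 b2 a2 b3 a3 b4 : R) : c0 != 0 ->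
  - (2 * a1 / c0 * b1) - - (2 * 0 / c0 * b2) = - (2 * a2 / c0 * b3) - - (2 * a3 / c0 * b4) ->
  a1 * b1 = a2 * b3 - a3 * b4.
Proof.
move=> hc h.
have e : a1 * b1 - (a2 * b3 - a3 * b4) = ((- (2 * a1 / c0 * b1) - - (2 * 0 / c0 * b2))
   - (- (2 * a2 / c0 * b3) - - (2 * a3 / c0 * b4))) * (- c0 / 2).
  by field.
by apply/eqP; rewrite -subr_eq0 e h subrr mul0r.
Qed.

Lemma star X : (forall Y, D X Y = 0) -> forall Z T,
  gf X X * lf eta (alpha Z T) =
  gf X T * lf eta (alpha Z X) - gf X (T *m J) * lf eta (alpha Z (X *m J)).
Proof.
move=> hX Z T.
have haa : forall Y, aa X Y = - ((2 * gf X Y / c) *: eta).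
  by move=> Y; have := hX Y; rewrite DE => /eqP; rewrite addr_eq0 => /eqP.
have hbb : forall Y, bb X Y = - ((2 * gf X (Y *m J) / c) *: eta).
  by move=> Y; rewrite -aaJr haa.
have := hgam X X Z T; rewrite !betaE /gammaF !wformE !haa !hbb !bformNl !bformZl gfXJX.
exact: aux_alg c_neq0.
Qed.

Lemma f_zero X1 X2 : (forall Y, D X1 Y = 0) -> (forall Y, D X2 Y = 0) ->
  X1 != 0 -> X2 != 0 -> gf X2 X1 = 0 -> gf X2 (X1 *m J) = 0 ->
  forall Z T, lf eta (alpha Z T) = 0.
Proof.
move=> h1 h2 n1 n2 o1 o2 Z T.
have p1 := gf_pos n1; have p2 := gf_pos n2.
have s1 : lf eta (alpha Z X1) = 0.
  by apply: (cancel_pos p2); rewrite star // o1 o2 !mul0r subrr.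
have s2 : lf eta (alpha Z (X1 *m J)) = 0.
  by apply: (cancel_pos p2); rewrite star // o2 JJ bformNr o1 oppr0 !mul0r subrr.
by apply: (cancel_pos p1); rewrite star // s1 s2 !mulr0 subrr.
Qed.

Lemma final_ineq S : (forall Y, D S Y = 0) -> (forall Z T, lf eta (alpha Z T) = 0) ->
  lf (alpha S S) (alpha (S *m J) (S *m J)) - lf (alpha S (S *m J)) (alpha S (S *m J)) <= 0.
Proof.
move=> hS hf.
pose A := alpha S S; pose B := alpha (S *m J) (S *m J); pose C := alpha S (S *m J).
pose k := 2 * gf S S / c.
have hAB : A + B = - (k *: eta).
  by have := hS S; rewrite DE aaE => /eqP; rewrite addr_eq0 => /eqP.
have hB : B = - (k *: eta) - A by rewrite -hAB [A + B]addrC addrK.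
have hAe : lf A eta = 0 by rewrite lfC hf.
have hCe : lf C eta = 0 by rewrite lfC hf.
have hAB' : lf A B = - lf A A by rewrite hB bformBr bformNr bformZr hAe mulr0 oppr0 sub0r.
pose q := A + (gf S S / c) *: eta.
have hq1 : lf q eta = 0 by rewrite /q bformDl bformZl hAe hee mulr0 addr0.
have hq2 : lf q w = 0.
  by rewrite /q bformDl bformZl haw -/c divfK ?c_neq0 // addNr.
have hqq : lf q q = lf A A.
  rewrite /q !(bformDl, bformDr, bformZl, bformZr) hAe hee (lfC eta A) hAe.
  by rewrite !mulr0 !addr0.
have [hA _] := D_pos hq1 hq2.
have hCw : lf C w = 0 by rewrite haw gfXJX oppr0.
have [hC _] := D_pos hCe hCw.
rewrite -/A -/B -/C hAB'; lra.
Qed.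


Lemma main_sec : exists (m : nat) (P : 'M[R]_(2 * n)),
    \rank P = (2 * m)%N /\ (P *m J <= P)%MS /\ ((n - s).+1 <= m)%N /\
    forall S : 'rV[R]_(2 * n), (S <= P)%MS ->
      lf (alpha S S) (alpha (S *m J) (S *m J))
      - lf (alpha S (S *m J)) (alpha S (S *m J)) <= 0.
Proof.
have [x0 hx0] := @exists_max _ (fun x => \rank (ME x)) (p + p)%N 0
  (fun x => rank_leq_col (ME x)).
pose N0 := kermx (ME x0).
have hN0 : forall t, (t <= N0)%MS -> forall Y, D t Y = 0.
  by move=> t /sub_kermxP ht; exact: ker_D hx0 t ht.
have hrk : (2 * n - 2 * s + 2 <= \rank N0)%N.
  rewrite mxrank_ker; have := rank_ME x0; lia.
have hev := even_rank hJ (N0_stable x0).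
have hh : \rank N0 = (2 * (\rank N0)./2)%N.
  have := odd_double_half (\rank N0); rewrite (negbTE hev) add0n => h.
  by rewrite -{1}h -muln2 mulnC.
exists (\rank N0)./2, N0; split; first exact: hh.
split; first exact: N0_stable.
split; first lia.
have : N0 != 0.
  apply/negP => /eqP h; move: hrk; rewrite h mxrank0; lia.
case/rowV0Pn => X1 hX1 n1.
pose K := row_mx (G *m X1^T) (G *m (X1 *m J)^T).
have hK : (2 * n <= \rank (kermx K) + 2)%N.
  rewrite mxrank_ker; have := rank_leq_col K; lia.
have hcap := mxrank_sum_cap N0 (kermx K).
have hle := rank_leq_col (N0 + kermx K)%MS.
have : (N0 :&: kermx K)%MS != 0.
  apply/negP => /eqP h; rewrite h mxrank0 in hcap; lia.
case/rowV0Pn => X2 hX2 n2.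
have hX2N : (X2 <= N0)%MS := submx_trans hX2 (capmxSl _ _).
have /sub_kermxP hX2K : (X2 <= kermx K)%MS := submx_trans hX2 (capmxSr _ _).
rewrite mul_mx_row -row_mx0 in hX2K; case/eq_row_mx: hX2K => k1 k2.
have o1 : gf X2 X1 = 0 by rewrite /bform -mulmxA k1 mxE.
have o2 : gf X2 (X1 *m J) = 0 by rewrite /bform -mulmxA k2 mxE.
have hf := f_zero (hN0 X1 hX1) (hN0 X2 hX2N) n1 n2 o1 o2.
by move=> S hS; exact: final_ineq (hN0 S hS) hf.
Qed.

End Main.

Unset Implicit Arguments.

Theorem proposition6 (R : realType) (n p : nat)
  (J : 'M[R]_(2 * n)) (G : 'M[R]_(2 * n)) (L : 'M[R]_p)
  (alpha : 'rV[R]_(2 * n) -> 'rV[R]_(2 * n) -> 'rV[R]_p) (w : 'rV[R]_p) (s : nat) :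
  J *m J = - 1%:M ->
  pos_def_inner G ->
  (forall X Y : 'rV[R]_(2 * n), bform G (X *m J) (Y *m J) = bform G X Y) ->
  (2 <= p)%N ->
  lorentzian L ->
  sym_bilinear alpha ->
  w != 0 -> bform L w w = 0 ->
  (forall X Y, bform L (alpha X Y) w = - bform G X Y) ->
  flat L (betaF J alpha) ->
  (forall X Y Z T, wform L (betaF J alpha X Y) (gammaF J alpha Z T)
                   = wform L (betaF J alpha X T) (gammaF J alpha Z Y)) ->
  S_degenerate L (betaF J alpha) ->
  has_dim (U0 (betaF J alpha)) s ->
  (s.+1 <= n)%N ->
  exists (m : nat) (P : 'M[R]_(2 * n)),
    \rank P = (2 * m)%N /\ (P *m J <= P)%MS /\ ((n - s).+1 <= m)%N /\
    forall S : 'rV[R]_(2 * n), (S <= P)%MS ->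
      bform L (alpha S S) (alpha (S *m J) (S *m J))
      - bform L (alpha S (S *m J)) (alpha S (S *m J)) <= 0.
Proof.
move=> hJ hG hGJ hp hL ha hw0 hww haw hflat hgam hdeg hdim hsn.
have [eta [he0 hee heab heU]] := exists_eta hJ ha hdeg.
case: hdim => Bm [hBf hBU].
exact: (main_sec hJ hG hGJ hp hL ha hw0 hww haw hflat hgam hsn hBf hBU he0 hee heab heU).
Qed.
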